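(* Let $k,n$ be integers with $n>2$ and $k\geq 4$, and let $c$ be an exact $k$-coloring of $\mathcal{B}_n$ with $c(\emptyset)=c([n])$ such that $\mathcal{B}_n$ contains no rainbow induced copy of $\mathcal{B}_2$. Then every rainbow chain in $\mathcal{B}_n$ has at most $4$ sets.
   Context: $\mathcal{B}_n$ is the Boolean lattice of subsets of $[n]$ under inclusion. An exact $k$-coloring is a surjective map $c:\mathcal{B}_n\to[k]$. A rainbow chain is a chain of sets whose colors are pairwise distinct. A rainbow induced copy of $\mathcal{B}_2$ is four sets $W_1\subsetneq W_2,W_3\subsetneq W_4$ with $W_2,W_3$ incomparable and pairwise distinct colors. *)

(* Defs.v *)
From mathcomp Require Import all_boot.
Set Implicit Arguments. Unset Strict Implicit. Unset Printing Implicit Defensive.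

Definition exact_coloring (n k : nat) (c : {set 'I_n} -> 'I_k) : Prop :=
  forall i : 'I_k, exists A : {set 'I_n}, c A = i.

Definition is_chain (n : nat) (F : {set {set 'I_n}}) : Prop :=
  forall A B, A \in F -> B \in F -> (A \subset B) || (B \subset A).

Definition rainbow (n k : nat) (c : {set 'I_n} -> 'I_k) (F : {set {set 'I_n}}) : Prop :=
  {in F &, injective c}.

Definition rainbow_induced_B2 (n k : nat) (c : {set 'I_n} -> 'I_k)
  (W1 W2 W3 W4 : {set 'I_n}) : Prop :=
  W1 \proper W2 /\ W1 \proper W3 /\ W2 \proper W4 /\ W3 \proper W4 /\
  ~~ (W2 \subset W3) /\ ~~ (W3 \subset W2) /\
  uniq [:: c W1; c W2; c W3; c W4].

(* Main.v *)
Require Import Defs.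
From mathcomp Require Import all_boot.

Set Implicit Arguments. Unset Strict Implicit. Unset Printing Implicit Defensive.

Lemma nu (T : eqType) (p q r s : T) : ~~ uniq [:: p; q; r; s] ->
  p = q \/ p = r \/ p = s \/ q = r \/ q = s \/ r = s.
Proof.
rewrite /= !inE.
case: (eqVneq p q) => [->|h1]; first by move=> _; tauto.
case: (eqVneq p r) => [->|h2]; first by move=> _; tauto.
case: (eqVneq p s) => [->|h3]; first by move=> _; tauto.
case: (eqVneq q r) => [->|h4]; first by move=> _; tauto.
case: (eqVneq q s) => [->|h5]; first by move=> _; tauto.
case: (eqVneq r s) => [->|h6]; first by move=> _; tauto.
by [].
Qed.

Lemma mkB2 n k (c : {set 'I_n} -> 'I_k) (W1 W2 W3 W4 : {set 'I_n}) (w2 w3 : 'I_n) :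
  W1 \subset W2 -> W1 \subset W3 -> W2 \subset W4 -> W3 \subset W4 ->
  w2 \in W2 -> w2 \notin W3 -> w3 \in W3 -> w3 \notin W2 ->
  ~ rainbow_induced_B2 c W1 W2 W3 W4 ->
  c W1 = c W2 \/ c W1 = c W3 \/ c W1 = c W4 \/ c W2 = c W3 \/ c W2 = c W4 \/ c W3 = c W4.
Proof.
move=> s12 s13 s24 s34 i2 n2 i3 n3 H; apply: nu; apply/negP => U; apply: H.
have n21 : w2 \notin W1 by apply: contra n2; apply: (subsetP s13).
have n31 : w3 \notin W1 by apply: contra n3; apply: (subsetP s12).
split; first by apply/properP; split => //; exists w2.
split; first by apply/properP; split => //; exists w3.
split; first by apply/properP; split => //; exists w3 => //; apply: (subsetP s34).
split; first by apply/properP; split => //; exists w2 => //; apply: (subsetP s24).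
split; first by apply/negP => /subsetP /(_ _ i2); rewrite (negbTE n2).
split; first by apply/negP => /subsetP /(_ _ i3); rewrite (negbTE n3).
exact: U.
Qed.

Lemma bottom n k (c : {set 'I_n} -> 'I_k) (A1 A2 A3 A4 A5 : {set 'I_n}) :
  (forall W1 W2 W3 W4 : {set 'I_n}, ~ rainbow_induced_B2 c W1 W2 W3 W4) ->
  A1 \proper A2 -> A2 \proper A3 -> A3 \proper A4 -> A4 \proper A5 ->
  uniq [:: c A1; c A2; c A3; c A4; c A5] ->
  c set0 = c A1 \/ c set0 = c A2.
Proof.
move=> NB p12 p23 p34 p45 U.
move: U; rewrite /= !inE !negb_or => /and5P [/and4P [d12 d13 d14 d15] /and3P [d23 d24 d25]
  /andP [d34 d35] d45 _].
move/eqP: d12 => d12; move/eqP: d13 => d13; move/eqP: d14 => d14; move/eqP: d15 => d15.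
move/eqP: d23 => d23; move/eqP: d24 => d24; move/eqP: d25 => d25.
move/eqP: d34 => d34; move/eqP: d35 => d35; move/eqP: d45 => d45.
case/properP: p12 => s12 [z z2 z1].
case/properP: p23 => s23 [x x3 x2].
case/properP: p34 => s34 [y y4 y3].
case/properP: p45 => s45 _.
have s13 := subset_trans s12 s23.
have s24 := subset_trans s23 s34.
have s14 := subset_trans s13 s34.
have s35 := subset_trans s34 s45.
have s25 := subset_trans s24 s45.
have s15 := subset_trans s14 s45.
have x4 : x \in A4 by apply: (subsetP s34).
have z3 : z \in A3 by apply: (subsetP s23).
have z4 : z \in A4 by apply: (subsetP s34).
have xy : x != y by apply: contraNneq y3 => <-.
have zx : z != x by apply: contraNneq x2 => <-.
set S := y |: A2.
set R := x |: (A2 :\ z).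
have s2S : A2 \subset S by apply: subsetUr.
have s1S := subset_trans s12 s2S.
have sS4 : S \subset A4 by rewrite subUset sub1set y4 s24.
have sS5 := subset_trans sS4 s45.
have xS : x \notin S by rewrite !inE negb_or xy x2.
have yS : y \in S by rewrite !inE eqxx.
have zS : z \in S by rewrite !inE z2 orbT.
have s1R : A1 \subset R.
  apply/subsetP => t t1; rewrite !inE (subsetP s12 _ t1) andbT.
  by apply/orP; right; apply: contraNneq z1 => <-.
have sR3 : R \subset A3.
  apply/subsetP => t; rewrite !inE => /orP [/eqP -> //|/andP [_ t2]].
  exact: (subsetP s23).
have sR4 := subset_trans sR3 s34.
have sR5 := subset_trans sR4 s45.
have xR : x \in R by rewrite !inE eqxx.
have zR : z \notin R by rewrite !inE eqxx (negbTE zx).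
have ha := mkB2 s23 s2S s34 sS4 x3 xS yS y3 (NB _ _ _ _).
have hb := mkB2 s13 s1S s35 sS5 x3 xS yS y3 (NB _ _ _ _).
have hs : c S = c A3 by clear -ha hb d12 d13 d14 d15 d23 d24 d25 d34 d35 d45; intuition congruence.
have hc := mkB2 s12 s1R s23 sR3 z2 zR xR x2 (NB _ _ _ _).
have hd := mkB2 s12 s1R s24 sR4 z2 zR xR x2 (NB _ _ _ _).
have hr12 : c R = c A1 \/ c R = c A2.
  clear -hc hd d12 d13 d14 d15 d23 d24 d25 d34 d35 d45; intuition congruence.
have he := mkB2 s1R s1S sR4 sS4 xR xS zS zR (NB _ _ _ _).
have hr : c R = c A1.
  rewrite hs in he; clear -he hr12 d12 d13 d14 d15 d23 d24 d25 d34 d35 d45; intuition congruence.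
have hf := mkB2 (sub0set R) (sub0set A2) sR4 s24 xR x2 z2 zR (NB _ _ _ _).
have hg := mkB2 (sub0set R) (sub0set A2) sR5 s25 xR x2 z2 zR (NB _ _ _ _).
rewrite hr in hf hg.
clear -hf hg d12 d13 d14 d15 d23 d24 d25 d34 d35 d45; intuition congruence.
Qed.

Lemma complB2 n k (c : {set 'I_n} -> 'I_k) :
  (forall W1 W2 W3 W4 : {set 'I_n}, ~ rainbow_induced_B2 c W1 W2 W3 W4) ->
  (forall W1 W2 W3 W4 : {set 'I_n}, ~ rainbow_induced_B2 (fun X => c (~: X)) W1 W2 W3 W4).
Proof.
move=> NB W1 W2 W3 W4 [p12 [p13 [p24 [p34 [n23 [n32 U]]]]]].
apply: (NB (~: W4) (~: W3) (~: W2) (~: W1)).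
rewrite /rainbow_induced_B2 !properC !setCS.
do 6 (split; first by []).
by rewrite -rev_uniq /rev /=.
Qed.

Theorem lemma2p11 (n k : nat) (c : {set 'I_n} -> 'I_k) :
  2 < n -> 4 <= k ->
  exact_coloring c ->
  c set0 = c setT ->
  (forall W1 W2 W3 W4 : {set 'I_n}, ~ rainbow_induced_B2 c W1 W2 W3 W4) ->
  forall F : {set {set 'I_n}}, is_chain F -> rainbow c F -> #|F| <= 4.
Proof.
move=> _ _ _ h0T NB F chF rbF; rewrite leqNgt; apply/negP => big.
pose leS := fun A B : {set 'I_n} => A \subset B.
pose s := sort leS (enum F).
have ss : sorted leS s.
  apply: (sort_sorted_in (P := mem F)); last by apply/allP => X; rewrite mem_enum.
  by move=> X Y hX hY; apply: chF.
have ps : pairwise leS s.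
  by rewrite -sorted_pairwise // => B A C; apply: subset_trans.
have us : uniq s by rewrite sort_uniq enum_uniq.
have sz : size s = #|F| by rewrite size_sort -cardE.
have ms : forall A, A \in s -> A \in F by move=> A; rewrite mem_sort mem_enum.
clear ss; clearbody s; move: ps us sz ms; case: s => [|A1 [|A2 [|A3 [|A4 [|A5 t]]]]];
  try by move=> _ _ e; rewrite -e in big.
move=> ps us _ ms.
have hsub : {subset [:: A1; A2; A3; A4; A5] <= F}.
  by move=> X hX; apply: ms; have: X \in [:: A1; A2; A3; A4; A5] ++ t by rewrite mem_cat hX.
have uc : uniq [:: c A1; c A2; c A3; c A4; c A5].
  have -> : [:: c A1; c A2; c A3; c A4; c A5] = map c [:: A1; A2; A3; A4; A5] by [].
  rewrite map_inj_in_uniq.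
    have: uniq ([:: A1; A2; A3; A4; A5] ++ t) by [].
    by rewrite cat_uniq => /andP [].
  by move=> X Y hX hY; apply: rbF; apply: hsub.
move: (us) ps; rewrite /= !inE !negb_or => /and5P [/and5P [d12 d13 d14 d15 _] /and4P [d23 d24 d25 _]
  /and3P [d34 d35 _] /andP [d45 _] _].
rewrite /= /leS => /and5P [/and5P [s12 s13 s14 s15 _] /and4P [s23 s24 s25 _] /and3P [s34 s35 _]
  /andP [s45 _] _].
have p12 : A1 \proper A2 by rewrite properEneq d12.
have p23 : A2 \proper A3 by rewrite properEneq d23.
have p34 : A3 \proper A4 by rewrite properEneq d34.
have p45 : A4 \proper A5 by rewrite properEneq d45.
have b1 := bottom NB p12 p23 p34 p45 uc.
have b2 := bottom (complB2 NB) (A1 := ~: A5) (A2 := ~: A4) (A3 := ~: A3) (A4 := ~: A2) (A5 := ~: A1).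
rewrite !properC !setCK setC0 in b2.
have := b2 p45 p34 p23 p12.
have uc' : uniq [:: c A5; c A4; c A3; c A2; c A1] by rewrite -rev_uniq /rev /=.
move=> /(_ uc') b2'.
move: uc; rewrite /= !inE !negb_or => /and5P [/and4P [e12 e13 e14 e15] /and3P [e23 e24 e25]
  /andP [e34 e35] e45 _].
rewrite -h0T in b2'.
case: b1 => e1; case: b2' => e2; rewrite e1 in e2; move/eqP: e2; by rewrite ?(negbTE e14) ?(negbTE e15) ?(negbTE e24) ?(negbTE e25).
Qed.
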